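(* Let $V$ be a set of $n=2^N$ nodes, let $\mathcal{N}_t$ be an $N$-dimensional hypercube on $V$ at time $t$, and let $\sigma_1,\dots,\sigma_{t-1}$ be the communication requests that occurred before time $t$. Then for every node $u\in V$ there exists a node $v\in V$, $v\neq u$, such that $$d_{Tree}(\mathcal{N}_t,(u,v))\ \ge\ \left\lceil \log_2 T_t(u,v)\right\rceil ,$$ where $T_t(u,v)$ is the working set number of the pair $(u,v)$ at time $t$ (i.e. computed as if $(u,v)$ were the request at time $t$).
   Context: Hypercube networks: $V$ is a set of $n=2^N$ nodes. An $N$-dimensional hypercube on $V$ is a bijection $\mathrm{Coord}:V\to\{0,1\}^N$; two nodes are linked iff their coordinates differ in exactly one bit. $\mathrm{Coord}_i(x)$ is the $i$-th bit. For $0\le d\le N$, the level-$d$ subtree $s^x_d$ of a node $x$ is the set of nodes whose coordinates agree with $\mathrm{Coord}(x)$ in the first $d$ bits (so $s^x_0=V$, $|s^x_d|=2^{N-d}$, $s^x_N=\{x\}$). The level-$d$ complementary subtree $\sim s^x_d$ ($1\le d\le N$) is $s^x_{d-1}\setminus s^x_d$. For nodes $u,v$, $L_{lca}(u,v)$ is the largest $\ell$ such that $u$ and $v$ lie in the same level-$\ell$ subtree (the length of the longest common prefix of their coordinates), and the tree distance is $d_{Tree}(\mathcal{N}_t,(u,v))=N-L_{lca}(u,v)$. Communications: a request sequence $\sigma=(\sigma_1,\dots,\sigma_m)$ with $\sigma_i=(u_i,v_i)\in V\times V$, $u_i\ne v_i$, request $\sigma_i$ occurring at time $i$; the network at time $i$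 is $\mathcal{N}_i$. For times $t'\le t$, the communication graph on $[t',t)$ is the simple undirected graph on vertex set $V$ with an edge $\{a,b\}$ for each request $(a,b)$ made at a time in $[t',t)$; $\mathcal{G}_x(t',t)$ denotes the connected component containing $x$ in it. Working set number $T_t(u,v)$ of a pair $(u,v)$ at time $t$: (i) if $u$ and $v$ communicated before time $t$, let $t'$ be the last such time; then $T_t(u,v)$ is the number of nodes of $\mathcal{G}_u(t',t)$; (ii) otherwise, let $V_u,V_v$ be the vertex sets of $\mathcal{G}_u(0,t)$ and $\mathcal{G}_v(0,t)$; if $v\in V_u$, then $T_t(u,v)=|V_u|$; if $v\notin V_u$, then $T_t(u,v)=\max(2^{d},|V_u|+|V_v|)$ where $d=d_{Tree}(\mathcal{N}_t,(u,v))$. *)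

(* Defs.v *)
From HB Require Import structures.
From mathcomp Require Import all_boot.
Set Implicit Arguments. Unset Strict Implicit. Unset Printing Implicit Defensive.

Section Hypercube.
Variables (V : finType) (N : nat) (Coord : V -> {ffun 'I_N -> bool}).

(* length of the longest common prefix of the coordinates of u and w:
   largest l <= N such that u and w agree on the first l bits
   (i.e. lie in the same level-l subtree) *)
Definition L_lca (u w : V) : nat :=
  \max_(l < N.+1 | [forall i : 'I_N, (i < l) ==> (Coord u i == Coord w i)]) l.

Definition dTree (u w : V) : nat := N - L_lca u w.

Definition commE (s : seq (V * V)) : rel V :=
  fun a b => ((a, b) \in s) || ((b, a) \in s).

Definition comp (s : seq (V * V)) (x : V) : {set V} :=
  [set y | connect (commE s) x y].

(* Working set number T_t(u,w), where s = [:: sigma_1; ...; sigma_{t-1}]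
   is the history of requests before time t (the k-th element, 0-based,
   occurred at time k+1). *)
Definition working_set (s : seq (V * V)) (u w : V) : nat :=
  let P := fun p : V * V => (p == (u, w)) || (p == (w, u)) in
  if has P s then
    (* requests at times in [t', t), t' = last time u and w communicated *)
    #|comp (drop (size s - (find P (rev s)).+1) s) u|
  else if w \in comp s u then #|comp s u|
  else maxn (2 ^ dTree u w) (#|comp s u| + #|comp s w|).

End Hypercube.

(* Main.v *)
Require Import Defs.
From HB Require Import structures.
From mathcomp Require Import all_boot.

Theorem mainTheorem1 (V : finType) (N : nat)
  (Coord : V -> {ffun 'I_N -> bool}) (s : seq (V * V)) :
  0 < N -> #|V| = 2 ^ N -> bijective Coord ->
  all (fun p : V * V => p.1 != p.2) s ->
  forall u : V, exists w : V,
    w != u /\ up_log 2 (working_set Coord s u w) <= dTree Coord u w.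
Proof.
move=> N0 cardV [g Cg gC] _ u.
pose i0 : 'I_N := Ordinal N0.
pose f' : {ffun 'I_N -> bool} := [ffun i => if i == i0 then ~~ Coord u i else Coord u i].
exists (g f').
have Cw : Coord (g f') = f' by rewrite gC.
have Hi0 : Coord (g f') i0 != Coord u i0 by rewrite Cw ffunE eqxx; case: (Coord u i0).
split.
  by apply: contraNneq Hi0 => ->.
have L0 : L_lca Coord u (g f') = 0.
  apply/eqP; rewrite -leqn0; apply/bigmax_leqP => l /forallP H.
  rewrite leqn0; apply/negPn/negP => l0.
  have := H i0; rewrite /= lt0n l0 /= eq_sym.
  by rewrite (negbTE Hi0).
rewrite /dTree L0 subn0.
apply: up_log_min => //.
have symE : symmetric (commE s) by move=> a b; rewrite /commE orbC.
have csym := sym_connect_sym symE.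
rewrite -cardV /working_set.
case: ifP => _; first exact: max_card.
case: ifP => Hw; first exact: max_card.
rewrite geq_max; apply/andP; split.
  by rewrite /dTree L0 subn0 cardV.
set A := Defs.comp s u; set B := Defs.comp s (g f').
have dis : [disjoint A & B].
  apply/pred0P => x /=; apply/negP => /andP [].
  rewrite !inE => ux wx.
  move/negbT: Hw; rewrite inE; apply/negP/negPn.
  by apply: connect_trans ux _; rewrite csym.
have I0 : A :&: B = set0 by apply/eqP; rewrite setI_eq0.
have := cardsUI A B; rewrite I0 cards0 addn0 => <-.
exact: max_card.
Qed.
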